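(* Let $(X,d)$ be any metric space, $x_0\in X$, $n\geq 1$. Equipped with the topology induced by the pseudometric $\rho$, $\pi_n(X,x_0)$ is a topological group, and for every $r>0$ the open ball $B_\rho(e,r)=\{a\in\pi_n(X,x_0)\mid\rho(e,a)<r\}$ is an open normal subgroup.
   Context: $\Omega^n(X,x_0)$ is the set of continuous maps $\alpha:[0,1]^n\to X$ with $\alpha(\partial[0,1]^n)=\{x_0\}$, with uniform metric $\mu(\alpha,\beta)=\sup_{t\in[0,1]^n}d(\alpha(t),\beta(t))$. For $a,b\in\pi_n(X,x_0)$, $\rho(a,b)=\inf\{\mu(\alpha,\beta)\mid\alpha\in a,\beta\in b\}$, which is a pseudometric; $e$ denotes the identity element. *)

(* Defs.v *)
From Stdlib Require Import Reals Lra Lia Arith ClassicalDescription.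
From Coquelicot Require Import Rbar Lub.
Open Scope R_scope.

(* points of [0,1]^n are sequences t with t i in [0,1] for i < n and t i = 0 for i >= n *)
Definition in_cube (n : nat) (t : nat -> R) : Prop :=
  forall i, ((i < n)%nat -> 0 <= t i <= 1) /\ ((n <= i)%nat -> t i = 0).

Definition cube (n : nat) : Type := {t : nat -> R | in_cube n t}.

Definition cpt {n} (t : cube n) : nat -> R := proj1_sig t.

Definition on_boundary {n} (t : cube n) : Prop :=
  exists i, (i < n)%nat /\ (cpt t i = 0 \/ cpt t i = 1).

Definition clamp_fun (n : nat) (t : nat -> R) : nat -> R :=
  fun i => if Nat.ltb i n then Rmin 1 (Rmax 0 (t i)) else 0.

Lemma clamp_in_cube n t : in_cube n (clamp_fun n t).
Proof.
  intro i; unfold clamp_fun; split; intro H.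
  - apply Nat.ltb_lt in H; rewrite H; split.
    + apply Rmin_glb; [lra | apply Rmax_l].
    + apply Rmin_l.
  - destruct (Nat.ltb_spec i n); [lia | reflexivity].
Qed.

Definition clamp (n : nat) (t : nat -> R) : cube n := exist _ (clamp_fun n t) (clamp_in_cube n t).

Definition cube_close {n} (t t' : cube n) (d : R) : Prop :=
  forall i, (i < n)%nat -> Rabs (cpt t i - cpt t' i) < d.

Definition cont_on_cube (X : Metric_Space) (n : nat) (f : cube n -> Base X) : Prop :=
  forall t eps, 0 < eps -> exists delta, 0 < delta /\
    forall t', cube_close t t' delta -> dist X (f t) (f t') < eps.

Definition cont_on_cube_I (X : Metric_Space) (n : nat) (H : cube n -> R -> Base X) : Prop :=
  forall t s, 0 <= s <= 1 -> forall eps, 0 < eps -> exists delta, 0 < delta /\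
    forall t' s', 0 <= s' <= 1 -> cube_close t t' delta -> Rabs (s - s') < delta ->
      dist X (H t s) (H t' s') < eps.

Definition is_Omega (X : Metric_Space) (x0 : Base X) (n : nat) (f : cube n -> Base X) : Prop :=
  cont_on_cube X n f /\ forall t, on_boundary t -> f t = x0.

Definition Omega (X : Metric_Space) (x0 : Base X) (n : nat) : Type :=
  {f : cube n -> Base X | is_Omega X x0 n f}.

Definition homotopic (X : Metric_Space) (x0 : Base X) (n : nat) (f g : cube n -> Base X) : Prop :=
  exists H : cube n -> R -> Base X,
    cont_on_cube_I X n H /\ (forall t, H t 0 = f t) /\ (forall t, H t 1 = g t) /\
    (forall t s, 0 <= s <= 1 -> on_boundary t -> H t s = x0).

Definition cls (X : Metric_Space) (x0 : Base X) (n : nat) (a : Omega X x0 n) : Omega X x0 n -> Prop :=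
  fun b => homotopic X x0 n (proj1_sig a) (proj1_sig b).

Definition is_class (X : Metric_Space) (x0 : Base X) (n : nat) (A : Omega X x0 n -> Prop) : Prop :=
  exists a, forall b, A b <-> cls X x0 n a b.

Definition pi_n (X : Metric_Space) (x0 : Base X) (n : nat) : Type :=
  {A : Omega X x0 n -> Prop | is_class X x0 n A}.

Definition concat (X : Metric_Space) (n : nat) (f g : cube n -> Base X) : cube n -> Base X :=
  fun t => if Rle_dec (cpt t 0) (1/2)
           then f (clamp n (fun i => if Nat.eqb i 0 then 2 * cpt t 0 else cpt t i))
           else g (clamp n (fun i => if Nat.eqb i 0 then 2 * cpt t 0 - 1 else cpt t i)).

Definition reverse (X : Metric_Space) (n : nat) (f : cube n -> Base X) : cube n -> Base X :=
  fun t => f (clamp n (fun i => if Nat.eqb i 0 then 1 - cpt t 0 else cpt t i)).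

Definition mulc (X : Metric_Space) (x0 : Base X) (n : nat) (A B : Omega X x0 n -> Prop) :
  Omega X x0 n -> Prop :=
  fun c => exists a b, A a /\ B b /\
    homotopic X x0 n (concat X n (proj1_sig a) (proj1_sig b)) (proj1_sig c).

Definition invc (X : Metric_Space) (x0 : Base X) (n : nat) (A : Omega X x0 n -> Prop) :
  Omega X x0 n -> Prop :=
  fun c => exists a, A a /\ homotopic X x0 n (reverse X n (proj1_sig a)) (proj1_sig c).

Lemma const_is_Omega X x0 n : is_Omega X x0 n (fun _ => x0).
Proof.
  split; [|reflexivity].
  intros t eps Heps; exists 1; split; [lra|]; intros t' _.
  replace (dist X x0 x0) with 0; [exact Heps|].
  symmetry; apply (proj2 (dist_refl X x0 x0)); reflexivity.
Qed.

Definition const_loop X x0 n : Omega X x0 n := exist _ (fun _ => x0) (const_is_Omega X x0 n).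

Lemma cls_is_class X x0 n a : is_class X x0 n (cls X x0 n a).
Proof. exists a; intro b; tauto. Qed.

(* group operations on pi_n (well-definedness is part of the main theorem; the
   fallback branches are never used when the product/inverse is a class) *)
Definition pe X x0 n : pi_n X x0 n := exist _ _ (cls_is_class X x0 n (const_loop X x0 n)).

Definition pmul X x0 n (a b : pi_n X x0 n) : pi_n X x0 n :=
  match excluded_middle_informative (is_class X x0 n (mulc X x0 n (proj1_sig a) (proj1_sig b))) with
  | left p => exist _ _ p
  | right _ => a
  end.

Definition pinv X x0 n (a : pi_n X x0 n) : pi_n X x0 n :=
  match excluded_middle_informative (is_class X x0 n (invc X x0 n (proj1_sig a))) with
  | left p => exist _ _ p
  | right _ => a
  end.

Definition mu X x0 n (f g : Omega X x0 n) : Rbar :=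
  Rbar_lub (fun r => exists t, r = Finite (dist X (proj1_sig f t) (proj1_sig g t))).

Definition rho X x0 n (a b : pi_n X x0 n) : Rbar :=
  Rbar_glb (fun m => exists f g, proj1_sig a f /\ proj1_sig b g /\ m = mu X x0 n f g).

Definition rho_ball X x0 n (a : pi_n X x0 n) (r : R) : pi_n X x0 n -> Prop :=
  fun b => Rbar_lt (rho X x0 n a b) (Finite r).

Definition rho_open X x0 n (U : pi_n X x0 n -> Prop) : Prop :=
  forall a, U a -> exists r, 0 < r /\ forall b, rho_ball X x0 n a r b -> U b.

Definition prod_open {G : Type} (opn : (G -> Prop) -> Prop) (U : G * G -> Prop) : Prop :=
  forall p, U p -> exists V W, opn V /\ opn W /\ V (fst p) /\ W (snd p) /\
    forall a b, V a -> W b -> U (a, b).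

Record is_topological_group {G : Type} (mul : G -> G -> G) (inv : G -> G) (e : G)
    (opn : (G -> Prop) -> Prop) : Prop := {
  tg_assoc : forall a b c, mul a (mul b c) = mul (mul a b) c;
  tg_mul1g : forall a, mul e a = a;
  tg_mulg1 : forall a, mul a e = a;
  tg_mulVg : forall a, mul (inv a) a = e;
  tg_mulgV : forall a, mul a (inv a) = e;
  tg_mul_cont : forall W, opn W -> prod_open opn (fun p => W (mul (fst p) (snd p)));
  tg_inv_cont : forall W, opn W -> opn (fun a => W (inv a))
}.

Definition is_open_normal_subgroup {G : Type} (mul : G -> G -> G) (inv : G -> G) (e : G)
    (opn : (G -> Prop) -> Prop) (H : G -> Prop) : Prop :=
  opn H /\ H e /\ (forall a b, H a -> H b -> H (mul a b)) /\ (forall a, H a -> H (inv a)) /\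
  (forall g h, H h -> H (mul (mul g h) (inv g))).

(* Main.v *)
Require Import Defs.
From Stdlib Require Import Reals Lra Lia Arith ClassicalDescription FunctionalExtensionality PropExtensionality ProofIrrelevance Classical.
From Coquelicot Require Import Rbar Lub.
Open Scope R_scope.
Open Scope R_scope.

Definition c01 (x : R) : R := Rmin 1 (Rmax 0 x).

Lemma c01_lip x y : Rabs (c01 x - c01 y) <= Rabs (x - y).
Proof. unfold c01, Rmin, Rmax. repeat destruct Rle_dec; unfold Rabs; repeat destruct Rcase_abs; lra. Qed.

Lemma c01_id x : 0 <= x <= 1 -> c01 x = x.
Proof. unfold c01, Rmin, Rmax. intros. repeat destruct Rle_dec; lra. Qed.

Lemma c01_range x : 0 <= c01 x <= 1.
Proof. unfold c01, Rmin, Rmax. repeat destruct Rle_dec; lra. Qed.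

Lemma clamp_fun_lt n u i : (i < n)%nat -> clamp_fun n u i = c01 (u i).
Proof. intro H; unfold clamp_fun; apply Nat.ltb_lt in H; rewrite H; reflexivity. Qed.

Lemma cpt_in n (t : cube n) i : (i<n)%nat -> 0 <= cpt t i <= 1.
Proof. destruct t as [t Ht]; simpl; intro H; exact (proj1 (Ht i) H). Qed.

Lemma cube_eq n (t t' : cube n) : (forall i, (i<n)%nat -> cpt t i = cpt t' i) -> t = t'.
Proof.
  destruct t as [t Ht], t' as [t' Ht']; simpl; intro H.
  assert (E : t = t').
  { apply functional_extensionality; intro i. destruct (Nat.lt_ge_cases i n) as [Hi|Hi]; auto.
    rewrite (proj2 (Ht i) Hi), (proj2 (Ht' i) Hi); auto. }
  subst; f_equal; apply proof_irrelevance.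
Qed.

Lemma cpt_clamp n u i : (i < n)%nat -> cpt (clamp n u) i = c01 (u i).
Proof. intro H. exact (clamp_fun_lt n u i H). Qed.

Lemma clamp_cpt n (t : cube n) : clamp n (cpt t) = t.
Proof. apply cube_eq; intros i Hi. rewrite cpt_clamp by auto. apply c01_id, cpt_in; auto. Qed.

Lemma clamp_ext n u v : (forall i, (i<n)%nat -> c01 (u i) = c01 (v i)) -> clamp n u = clamp n v.
Proof. intro H; apply cube_eq; intros i Hi; rewrite !cpt_clamp by auto; auto. Qed.

Definition upd {n} (t : cube n) (x : R) : cube n :=
  clamp n (fun i => if Nat.eqb i 0 then x else cpt t i).

Lemma upd0 n (t : cube n) x : (0 < n)%nat -> cpt (upd t x) 0 = c01 x.
Proof. intro H; unfold upd; rewrite cpt_clamp by auto; reflexivity. Qed.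

Lemma updi n (t : cube n) x i : (i < n)%nat -> i <> 0%nat -> cpt (upd t x) i = cpt t i.
Proof.
  intros H H0; unfold upd; rewrite cpt_clamp by auto.
  destruct (Nat.eqb_spec i 0); [lia|]. apply c01_id, cpt_in; auto.
Qed.

Lemma upd_upd n (t : cube n) x y : upd (upd t x) y = upd t y.
Proof.
  unfold upd at 1 3; apply clamp_ext; intros i Hi.
  destruct (Nat.eqb_spec i 0); auto. f_equal. apply updi; auto.
Qed.

Lemma upd_ext n (t : cube n) x y : c01 x = c01 y -> upd t x = upd t y.
Proof. intro H; unfold upd; apply clamp_ext; intros i Hi; destruct (Nat.eqb_spec i 0); auto. Qed.

Lemma upd_ext' n (t : cube n) x y : x = y -> upd t x = upd t y.
Proof. intros ->; auto. Qed.

Lemma upd_self n (t : cube n) : upd t (cpt t 0) = t.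
Proof.
  apply cube_eq; intros i Hi; unfold upd; rewrite cpt_clamp by auto.
  destruct (Nat.eqb_spec i 0); subst; apply c01_id, cpt_in; auto.
Qed.

Lemma bnd_clamp n v i : (i < n)%nat -> (v i = 0 \/ v i = 1) -> on_boundary (clamp n v).
Proof.
  intros Hi Hv; exists i; split; auto. rewrite cpt_clamp by auto.
  destruct Hv as [-> | ->]; [left|right]; apply c01_id; lra.
Qed.

Lemma bnd_upd0 n (t : cube n) : (0 < n)%nat -> on_boundary (upd t 0).
Proof. intro H; apply bnd_clamp with 0%nat; auto. Qed.

Lemma bnd_upd1 n (t : cube n) : (0 < n)%nat -> on_boundary (upd t 1).
Proof. intro H; apply bnd_clamp with 0%nat; auto. Qed.

Lemma bnd_cases n (t : cube n) : on_boundary t ->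
  (cpt t 0 = 0 \/ cpt t 0 = 1) \/ (forall x, on_boundary (upd t x)).
Proof.
  intros [i [Hi Hb]]. destruct (Nat.eq_dec i 0) as [->|Hne]; [left; auto|right].
  intro x; exists i; split; auto. rewrite updi; auto.
Qed.

Definition rclose (n : nat) (u v : nat -> R) (d : R) := forall i, (i < n)%nat -> Rabs (u i - v i) < d.

Definition rcont (X : Metric_Space) n (F : (nat -> R) -> R -> Base X) :=
  forall u s eps, 0 < eps -> exists delta, 0 < delta /\ forall u' s', rclose n u u' delta ->
    Rabs (s - s') < delta -> dist X (F u s) (F u' s') < eps.

Definition hcont n (h : (nat -> R) -> R -> R) :=
  forall u s eps, 0 < eps -> exists delta, 0 < delta /\ forall u' s', rclose n u u' delta ->
    Rabs (s - s') < delta -> Rabs (h u s - h u' s') < eps.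

Definition scont n (sg : (nat -> R) -> R -> nat -> R) :=
  forall u s eps, 0 < eps -> exists delta, 0 < delta /\ forall u' s', rclose n u u' delta ->
    Rabs (s - s') < delta -> rclose n (sg u s) (sg u' s') eps.

Lemma lt_min_l a b c : a < Rmin b c -> a < b.
Proof. intro H; eapply Rlt_le_trans; [exact H| apply Rmin_l]. Qed.
Lemma lt_min_r a b c : a < Rmin b c -> a < c.
Proof. intro H; eapply Rlt_le_trans; [exact H| apply Rmin_r]. Qed.
Lemma rclose_min_l n u v b c : rclose n u v (Rmin b c) -> rclose n u v b.
Proof. intros H i Hi; exact (lt_min_l _ _ _ (H i Hi)). Qed.
Lemma rclose_min_r n u v b c : rclose n u v (Rmin b c) -> rclose n u v c.
Proof. intros H i Hi; exact (lt_min_r _ _ _ (H i Hi)). Qed.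

Lemma rclose_clamp n u v d : rclose n u v d -> cube_close (clamp n u) (clamp n v) d.
Proof.
  intros H i Hi. rewrite !cpt_clamp by auto. eapply Rle_lt_trans; [apply c01_lip|]. auto.
Qed.

Lemma rcont_omega X n f : cont_on_cube X n f -> rcont X n (fun u s => f (clamp n u)).
Proof.
  intros Hf u s eps He. destruct (Hf (clamp n u) eps He) as [d [Hd Hd']].
  exists d; split; auto. intros u' s' Hu _. apply Hd', rclose_clamp; auto.
Qed.

Lemma rcont_hom X n H : cont_on_cube_I X n H -> rcont X n (fun u s => H (clamp n u) (c01 s)).
Proof.
  intros Hf u s eps He. destruct (Hf (clamp n u) (c01 s) (c01_range s) eps He) as [d [Hd Hd']].
  exists d; split; auto. intros u' s' Hu Hs. apply Hd'; [apply c01_range| apply rclose_clamp; auto|].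
  eapply Rle_lt_trans; [apply c01_lip|]; auto.
Qed.

Lemma rcont_comp X n F sg tau : rcont X n F -> scont n sg -> hcont n tau ->
  rcont X n (fun u s => F (sg u s) (tau u s)).
Proof.
  intros HF Hs Ht u s eps He.
  destruct (HF (sg u s) (tau u s) eps He) as [d [Hd Hd']].
  destruct (Hs u s d Hd) as [d1 [Hd1 Hd1']].
  destruct (Ht u s d Hd) as [d2 [Hd2 Hd2']].
  exists (Rmin d1 d2); split; [apply Rmin_pos; auto|].
  intros u' s' Hu Hs'. apply Hd'.
  - apply Hd1'; [eapply rclose_min_l; eauto | eapply lt_min_l; eauto].
  - apply Hd2'; [eapply rclose_min_r; eauto | eapply lt_min_r; eauto].
Qed.

Lemma scont_upd n h : hcont n h -> scont n (fun u s i => if Nat.eqb i 0 then h u s else u i).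
Proof.
  intros Hh u s eps He. destruct (Hh u s eps He) as [d [Hd Hd']].
  exists (Rmin d eps); split; [apply Rmin_pos; auto|].
  intros u' s' Hu Hs i Hi. destruct (Nat.eqb i 0).
  - apply Hd'; [eapply rclose_min_l; eauto | eapply lt_min_l; eauto].
  - exact (lt_min_r _ _ _ (Hu i Hi)).
Qed.

Lemma scont_id n : scont n (fun u s => u).
Proof. intros u s eps He; exists eps; split; auto. Qed.

Lemma hcont_lip n h L : (0 < n)%nat -> 0 <= L ->
  (forall u s u' s', Rabs (h u s - h u' s') <= L * (Rabs (u 0%nat - u' 0%nat) + Rabs (s - s'))) ->
  hcont n h.
Proof.
  intros Hn HL Hl u s eps He. exists (eps / (2 * L + 2)); split.
  { apply Rdiv_lt_0_compat; lra. }
  intros u' s' Hu Hs. specialize (Hu 0%nat Hn).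
  eapply Rle_lt_trans; [apply Hl|].
  set (d := eps / (2 * L + 2)) in *.
  assert (Hd : d * (2 * L + 2) = eps) by (unfold d; field; lra).
  assert (0 <= Rabs (u 0%nat - u' 0%nat)) by apply Rabs_pos.
  assert (0 <= Rabs (s - s')) by apply Rabs_pos.
  nra.
Qed.

Lemma rcont_glue X n F1 F2 c : rcont X n F1 -> rcont X n F2 -> hcont n c ->
  (forall u s, c u s = 1/2 -> F1 u s = F2 u s) ->
  rcont X n (fun u s => if Rle_dec (c u s) (1/2) then F1 u s else F2 u s).
Proof.
  intros H1 H2 Hc Heq u s eps He.
  destruct (H1 u s eps He) as [d1 [Hd1 Hd1']].
  destruct (H2 u s eps He) as [d2 [Hd2 Hd2']].
  destruct (Rtotal_order (c u s) (1/2)) as [Hlt|[Heq0|Hgt]].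
  - destruct (Hc u s (1/2 - c u s)) as [d3 [Hd3 Hd3']]; [lra|].
    exists (Rmin d1 d3); split; [apply Rmin_pos; auto|].
    intros u' s' Hu Hs.
    assert (Hu1 : rclose n u u' d1) by (eapply rclose_min_l; eauto).
    assert (Hu3 : rclose n u u' d3) by (eapply rclose_min_r; eauto).
    assert (Hs1 : Rabs (s - s') < d1) by (eapply lt_min_l; eauto).
    assert (Hs3 : Rabs (s - s') < d3) by (eapply lt_min_r; eauto).
    specialize (Hd3' u' s' Hu3 Hs3). apply Rabs_def2 in Hd3'.
    destruct (Rle_dec (c u s) (1/2)); [|lra]. destruct (Rle_dec (c u' s') (1/2)); [|lra]. auto.
  - exists (Rmin d1 d2); split; [apply Rmin_pos; auto|].
    intros u' s' Hu Hs.
    assert (Hu1 : rclose n u u' d1) by (eapply rclose_min_l; eauto).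
    assert (Hu2 : rclose n u u' d2) by (eapply rclose_min_r; eauto).
    assert (Hs1 : Rabs (s - s') < d1) by (eapply lt_min_l; eauto).
    assert (Hs2 : Rabs (s - s') < d2) by (eapply lt_min_r; eauto).
    destruct (Rle_dec (c u s) (1/2)); [|lra].
    destruct (Rle_dec (c u' s') (1/2)); auto. rewrite Heq; auto.
  - destruct (Hc u s (c u s - 1/2)) as [d3 [Hd3 Hd3']]; [lra|].
    exists (Rmin d2 d3); split; [apply Rmin_pos; auto|].
    intros u' s' Hu Hs.
    assert (Hu1 : rclose n u u' d2) by (eapply rclose_min_l; eauto).
    assert (Hu3 : rclose n u u' d3) by (eapply rclose_min_r; eauto).
    assert (Hs1 : Rabs (s - s') < d2) by (eapply lt_min_l; eauto).
    assert (Hs3 : Rabs (s - s') < d3) by (eapply lt_min_r; eauto).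
    specialize (Hd3' u' s' Hu3 Hs3). apply Rabs_def2 in Hd3'.
    destruct (Rle_dec (c u s) (1/2)); [lra|]. destruct (Rle_dec (c u' s') (1/2)); [lra|]. auto.
Qed.

Lemma to_cont X n f G : rcont X n G -> (forall t, f t = G (cpt t) 0) -> cont_on_cube X n f.
Proof.
  intros HG Hf t eps He. destruct (HG (cpt t) 0 eps He) as [d [Hd Hd']].
  exists d; split; auto. intros t' Ht. rewrite !Hf. apply Hd'; auto.
  replace (0 - 0) with 0 by ring; rewrite Rabs_R0; auto.
Qed.

Lemma to_contI X n H G : rcont X n G -> (forall t s, 0 <= s <= 1 -> H t s = G (cpt t) s) ->
  cont_on_cube_I X n H.
Proof.
  intros HG Hf t s Hs eps He. destruct (HG (cpt t) s eps He) as [d [Hd Hd']].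
  exists d; split; auto. intros t' s' Hs' Ht Hss. rewrite !Hf by auto. apply Hd'; auto.
Qed.

Lemma hcont_s n : (0 < n)%nat -> forall a b, hcont n (fun u s => a * s + b).
Proof.
  intros Hn a b. apply hcont_lip with (Rabs a); auto. apply Rabs_pos.
  intros u s u' s'. replace (a * s + b - (a * s' + b)) with (a * (s - s')) by ring.
  rewrite Rabs_mult. assert (0 <= Rabs (u 0%nat - u' 0%nat)) by apply Rabs_pos.
  assert (0 <= Rabs a) by apply Rabs_pos. nra.
Qed.

Lemma hcont_u0 n : (0 < n)%nat -> forall a b, hcont n (fun u s => a * u 0%nat + b).
Proof.
  intros Hn a b. apply hcont_lip with (Rabs a); auto. apply Rabs_pos.
  intros u s u' s'. replace (a * u 0%nat + b - (a * u' 0%nat + b)) with (a * (u 0%nat - u' 0%nat)) by ring.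
  rewrite Rabs_mult. assert (0 <= Rabs (s - s')) by apply Rabs_pos.
  assert (0 <= Rabs a) by apply Rabs_pos. nra.
Qed.

Lemma hom_Omega1 X x0 n f g : homotopic X x0 n f g -> is_Omega X x0 n f.
Proof.
  intros [H [Hc [H0 [H1 Hb]]]]. split.
  - intros t eps He. destruct (Hc t 0 ltac:(lra) eps He) as [d [Hd Hd']].
    exists d; split; auto. intros t' Ht. rewrite <- !H0. apply Hd'; auto; [lra|].
    replace (0-0) with 0 by ring; rewrite Rabs_R0; auto.
  - intros t Ht. rewrite <- H0. apply Hb; auto; lra.
Qed.

Lemma hom_refl X x0 n f : is_Omega X x0 n f -> homotopic X x0 n f f.
Proof.
  intros [Hc Hb]. exists (fun t s => f t). split; [|split; [|split]]; auto.
  apply to_contI with (G := fun u s => f (clamp n u)).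
  - apply rcont_omega; auto.
  - intros t s _. rewrite clamp_cpt; auto.
Qed.

Lemma hom_Omega2 X x0 n f g : homotopic X x0 n f g -> is_Omega X x0 n g.
Proof.
  intros [H [Hc [H0 [H1 Hb]]]]. split.
  - intros t eps He. destruct (Hc t 1 ltac:(lra) eps He) as [d [Hd Hd']].
    exists d; split; auto. intros t' Ht. rewrite <- !H1. apply Hd'; auto; [lra|].
    replace (1-1) with 0 by ring; rewrite Rabs_R0; auto.
  - intros t Ht. rewrite <- H1. apply Hb; auto; lra.
Qed.

Lemma hom_sym X x0 n f g : (0 < n)%nat -> homotopic X x0 n f g -> homotopic X x0 n g f.
Proof.
  intros Hn [H [Hc [H0 [H1 Hb]]]]. exists (fun t s => H t (1 - s)).
  split; [|split; [|split]].
  - apply to_contI with (G := fun u s => H (clamp n u) (c01 (-1 * s + 1))).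
    + exact (rcont_comp X n _ (fun u s => u) (fun u s => -1 * s + 1) (rcont_hom X n H Hc) (scont_id n) (hcont_s n Hn _ _)).
    + intros t s Hs. rewrite clamp_cpt, c01_id by lra. f_equal; ring.
  - intro t. replace (1 - 0) with 1 by ring; auto.
  - intro t. replace (1 - 1) with 0 by ring; auto.
  - intros t s Hs Ht. apply Hb; auto; lra.
Qed.

Lemma hom_trans X x0 n f g h : (0 < n)%nat -> homotopic X x0 n f g -> homotopic X x0 n g h ->
  homotopic X x0 n f h.
Proof.
  intros Hn [H [Hc [H0 [H1 Hb]]]] [K [Kc [K0 [K1 Kb]]]].
  exists (fun t s => if Rle_dec s (1/2) then H t (2 * s) else K t (2 * s - 1)).
  split; [|split; [|split]].
  - apply to_contI with (G := fun u s => if Rle_dec ((fun u s => s) u s) (1/2)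
        then H (clamp n u) (c01 (2 * s + 0)) else K (clamp n u) (c01 (2 * s + -1))).
    + apply rcont_glue.
      * exact (rcont_comp X n _ (fun u s => u) (fun u s => 2 * s + 0) (rcont_hom X n H Hc) (scont_id n) (hcont_s n Hn _ _)).
      * exact (rcont_comp X n _ (fun u s => u) (fun u s => 2 * s + -1) (rcont_hom X n K Kc) (scont_id n) (hcont_s n Hn _ _)).
      * apply hcont_lip with 1; auto; [lra|]. intros u s u' s'. assert (0 <= Rabs (u 0%nat - u' 0%nat)) by apply Rabs_pos. lra.
      * intros u s Hs. rewrite c01_id, (c01_id (2 * s + -1)) by lra.
        replace (2 * s + 0) with 1 by lra. replace (2 * s + -1) with 0 by lra. rewrite H1, K0; auto.
    + intros t s Hs. simpl. rewrite clamp_cpt. destruct Rle_dec.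
      * rewrite c01_id by lra. f_equal; ring.
      * rewrite c01_id by lra. f_equal; ring.
  - intro t. destruct Rle_dec; [|lra]. rewrite Rmult_0_r; auto.
  - intro t. destruct Rle_dec; [lra|]. replace (2 * 1 - 1) with 1 by ring; auto.
  - intros t s Hs Ht. destruct Rle_dec; [apply Hb|apply Kb]; auto; lra.
Qed.

Lemma concat_eq X n f g t : concat X n f g t =
  if Rle_dec (cpt t 0%nat) (1/2) then f (upd t (2 * cpt t 0%nat)) else g (upd t (2 * cpt t 0%nat - 1)).
Proof. reflexivity. Qed.

Lemma reverse_eq X n f t : reverse X n f t = f (upd t (1 - cpt t 0%nat)).
Proof. reflexivity. Qed.

Lemma concat_hom X x0 n f1 f2 g1 g2 : (0 < n)%nat ->
  homotopic X x0 n f1 g1 -> homotopic X x0 n f2 g2 ->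
  homotopic X x0 n (concat X n f1 f2) (concat X n g1 g2).
Proof.
  intros Hn [H [Hc [H0 [H1 Hb]]]] [K [Kc [K0 [K1 Kb]]]].
  exists (fun t s => if Rle_dec (cpt t 0%nat) (1/2) then H (upd t (2 * cpt t 0%nat)) s
                     else K (upd t (2 * cpt t 0%nat - 1)) s).
  split; [|split; [|split]].
  - apply to_contI with (G := fun u s => if Rle_dec ((fun u s => 1 * u 0%nat + 0) u s) (1/2)
        then H (clamp n (fun i => if Nat.eqb i 0 then 2 * u 0%nat + 0 else u i)) (c01 (1 * s + 0))
        else K (clamp n (fun i => if Nat.eqb i 0 then 2 * u 0%nat + -1 else u i)) (c01 (1 * s + 0))).
    + apply rcont_glue.
      * exact (rcont_comp X n _ _ (fun u s => 1 * s + 0) (rcont_hom X n H Hc) (scont_upd n _ (hcont_u0 n Hn 2 0)) (hcont_s n Hn _ _)).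
      * exact (rcont_comp X n _ _ (fun u s => 1 * s + 0) (rcont_hom X n K Kc) (scont_upd n _ (hcont_u0 n Hn 2 (-1))) (hcont_s n Hn _ _)).
      * apply hcont_u0; auto.
      * intros u s Hs. transitivity x0; [apply Hb| symmetry; apply Kb]; try apply c01_range;
          apply bnd_clamp with 0%nat; auto; simpl; lra.
    + intros t s Hs. simpl. rewrite c01_id by lra. replace (1 * s + 0) with s by ring.
      replace (1 * cpt t 0%nat + 0) with (cpt t 0%nat) by ring.
      destruct Rle_dec; f_equal; apply clamp_ext; intros i Hi; destruct (Nat.eqb i 0); auto; f_equal; ring.
  - intro t. rewrite concat_eq. destruct Rle_dec; [apply H0|apply K0].
  - intro t. rewrite concat_eq. destruct Rle_dec; [apply H1|apply K1].
  - intros t s Hs Ht. destruct (bnd_cases n t Ht) as [[E|E]|E].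
    + destruct Rle_dec; [|lra]. apply Hb; auto. rewrite E, Rmult_0_r. apply bnd_upd0; auto.
    + destruct Rle_dec; [lra|]. apply Kb; auto. rewrite E. replace (2*1-1) with 1 by ring. apply bnd_upd1; auto.
    + destruct Rle_dec; [apply Hb|apply Kb]; auto.
Qed.

Lemma reverse_hom X x0 n f g : (0 < n)%nat ->
  homotopic X x0 n f g -> homotopic X x0 n (reverse X n f) (reverse X n g).
Proof.
  intros Hn [H [Hc [H0 [H1 Hb]]]].
  exists (fun t s => H (upd t (1 - cpt t 0%nat)) s).
  split; [|split; [|split]].
  - apply to_contI with (G := fun u s =>
        H (clamp n (fun i => if Nat.eqb i 0 then -1 * u 0%nat + 1 else u i)) (c01 (1 * s + 0))).
    + exact (rcont_comp X n _ _ (fun u s => 1 * s + 0) (rcont_hom X n H Hc) (scont_upd n _ (hcont_u0 n Hn (-1) 1)) (hcont_s n Hn _ _)).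
    + intros t s Hs. simpl. rewrite c01_id by lra. replace (1 * s + 0) with s by ring.
      f_equal; apply clamp_ext; intros i Hi; destruct (Nat.eqb i 0); auto; f_equal; ring.
  - intro t. apply H0.
  - intro t. apply H1.
  - intros t s Hs Ht. destruct (bnd_cases n t Ht) as [[E|E]|E]; apply Hb; auto.
    + rewrite E. replace (1-0) with 1 by ring. apply bnd_upd1; auto.
    + rewrite E. replace (1-1) with 0 by ring. apply bnd_upd0; auto.
Qed.

Lemma concat_Omega X x0 n f g : (0 < n)%nat -> is_Omega X x0 n f -> is_Omega X x0 n g ->
  is_Omega X x0 n (concat X n f g).
Proof. intros Hn Hf Hg. eapply hom_Omega1, concat_hom; auto; apply hom_refl; auto. Qed.

Lemma reverse_Omega X x0 n f : (0 < n)%nat -> is_Omega X x0 n f -> is_Omega X x0 n (reverse X n f).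
Proof. intros Hn Hf. eapply hom_Omega1, reverse_hom; auto; apply hom_refl; auto. Qed.

Lemma hcont_id_s n : (0 < n)%nat -> hcont n (fun u s => s).
Proof.
  intros Hn. apply hcont_lip with 1; auto; [lra|]. intros u s u' s'.
  assert (0 <= Rabs (u 0%nat - u' 0%nat)) by apply Rabs_pos. lra.
Qed.

Lemma abs_le_iff x y : Rabs x <= y <-> -y <= x <= y.
Proof. unfold Rabs; destruct Rcase_abs; split; intros; lra. Qed.

Lemma pb1 a A D : 0 <= a <= 1 -> 0 <= A -> -(4*A) <= D <= 4*A -> -(4*A) <= a * D <= 4 * A.
Proof.
  intros. assert (a * (4*A - D) >= 0) by (apply Rle_ge, Rmult_le_pos; lra).
  assert (a * (4*A + D) >= 0) by (apply Rle_ge, Rmult_le_pos; lra).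
  assert ((1-a)*A >= 0) by (apply Rle_ge, Rmult_le_pos; lra). split; nra.
Qed.

Lemma pb2 d S w : -S <= d <= S -> -1 <= w <= 1 -> -S <= d * w <= S.
Proof.
  intros. assert ((S - d) * (1 + w) >= 0) by (apply Rle_ge, Rmult_le_pos; lra).
  assert ((S + d) * (1 - w) >= 0) by (apply Rle_ge, Rmult_le_pos; lra).
  assert ((S - d) * (1 - w) >= 0) by (apply Rle_ge, Rmult_le_pos; lra).
  assert ((S + d) * (1 + w) >= 0) by (apply Rle_ge, Rmult_le_pos; lra). split; nra.
Qed.

Definition rp X n (f : cube n -> Base X) (phi : R -> R) : cube n -> Base X :=
  fun t => f (upd t (phi (cpt t 0%nat))).

Definition goodphi (phi : R -> R) :=
  (forall x y, Rabs (phi x - phi y) <= 2 * Rabs (x - y)) /\ (forall x, 0 <= x <= 1 -> 0 <= phi x <= 1).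

Lemma reparam_hom X x0 n f phi psi : (0 < n)%nat -> is_Omega X x0 n f ->
  goodphi phi -> goodphi psi -> phi 0 = psi 0 -> phi 1 = psi 1 ->
  (phi 0 = 0 \/ phi 0 = 1) -> (phi 1 = 0 \/ phi 1 = 1) ->
  homotopic X x0 n (rp X n f phi) (rp X n f psi).
Proof.
  intros Hn [Hfc Hfb] [Pl Pr] [Ql Qr] E0 E1 B0 B1.
  set (h := fun (u : nat -> R) s => phi (c01 (u 0%nat)) + c01 s * (psi (c01 (u 0%nat)) - phi (c01 (u 0%nat)))).
  set (G := fun u s => f (clamp n (fun i => if Nat.eqb i 0 then h u s else u i))).
  assert (Hh : hcont n h).
  { apply hcont_lip with 6; auto; [lra|]. intros u s u' s'. unfold h.
    set (A := Rabs (u 0%nat - u' 0%nat)). set (S := Rabs (s - s')).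
    assert (HA : Rabs (c01 (u 0%nat) - c01 (u' 0%nat)) <= A) by apply c01_lip.
    assert (HS : Rabs (c01 s - c01 s') <= S) by apply c01_lip.
    pose proof (Pl (c01 (u 0%nat)) (c01 (u' 0%nat))) as P1.
    pose proof (Ql (c01 (u 0%nat)) (c01 (u' 0%nat))) as Q1.
    pose proof (Pr _ (c01_range (u 0%nat))). pose proof (Pr _ (c01_range (u' 0%nat))).
    pose proof (Qr _ (c01_range (u 0%nat))). pose proof (Qr _ (c01_range (u' 0%nat))).
    pose proof (c01_range s). pose proof (c01_range s').
    assert (P1' : Rabs (phi (c01 (u 0%nat)) - phi (c01 (u' 0%nat))) <= 2 * A) by lra.
    assert (Q1' : Rabs (psi (c01 (u 0%nat)) - psi (c01 (u' 0%nat))) <= 2 * A) by lra.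
    clear P1 Q1.
    apply abs_le_iff in HA, HS, P1', Q1'. apply abs_le_iff.
    set (p := phi (c01 (u 0%nat))) in *. set (p' := phi (c01 (u' 0%nat))) in *.
    set (q := psi (c01 (u 0%nat))) in *. set (q' := psi (c01 (u' 0%nat))) in *.
    set (a := c01 s) in *. set (a' := c01 s') in *.
    clearbody p p' q q' a a' A S.
    assert (A0 : 0 <= A) by lra. assert (S0 : 0 <= S) by lra.
    pose proof (pb1 a A ((q - q') - (p - p')) ltac:(lra) A0 ltac:(lra)) as T2.
    pose proof (pb2 (a - a') S (q' - p') ltac:(lra) ltac:(lra)) as T3.
    replace (p + a * (q - p) - (p' + a' * (q' - p'))) with
      ((p - p') + a * ((q - q') - (p - p')) + (a - a') * (q' - p')) by ring.
    split; lra. }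
  exists (fun t s => G (cpt t) s). split; [|split; [|split]].
  - apply to_contI with G; auto.
    exact (rcont_comp X n _ _ (fun u s => s) (rcont_omega X n f Hfc) (scont_upd n h Hh) (hcont_id_s n Hn)).
  - intro t. unfold G, rp, upd. f_equal; apply clamp_ext; intros i Hi; destruct (Nat.eqb i 0); auto.
    f_equal. unfold h. rewrite (c01_id 0) by lra. rewrite c01_id by (apply cpt_in; auto). ring.
  - intro t. unfold G, rp, upd. f_equal; apply clamp_ext; intros i Hi; destruct (Nat.eqb i 0); auto.
    f_equal. unfold h. rewrite (c01_id 1) by lra. rewrite c01_id by (apply cpt_in; auto). ring.
  - intros t s Hs Ht. change (f (upd t (h (cpt t) s)) = x0). apply Hfb.
    destruct (bnd_cases n t Ht) as [[E|E]|E]; auto; apply bnd_clamp with 0%nat; auto; simpl; unfold h; rewrite E.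
    + rewrite (c01_id 0) by lra. rewrite <- E0. replace (phi 0 + c01 s * (phi 0 - phi 0)) with (phi 0) by ring. auto.
    + rewrite (c01_id 1) by lra. rewrite <- E1. replace (phi 1 + c01 s * (phi 1 - phi 1)) with (phi 1) by ring. auto.
Qed.

Lemma upd0' n (t : cube n) x : (0 < n)%nat -> 0 <= x <= 1 -> cpt (upd t x) 0%nat = x.
Proof. intros Hn Hx; rewrite upd0 by auto; apply c01_id; auto. Qed.

Lemma cc_upd_l X n f g (t : cube n) x : (0 < n)%nat -> 0 <= x <= 1/2 ->
  concat X n f g (upd t x) = f (upd t (2 * x)).
Proof.
  intros Hn Hx. rewrite concat_eq, upd0' by (auto; lra). destruct Rle_dec; [|lra].
  rewrite upd_upd; auto.
Qed.

Lemma cc_upd_r X n f g (t : cube n) x : (0 < n)%nat -> 1/2 < x <= 1 ->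
  concat X n f g (upd t x) = g (upd t (2 * x - 1)).
Proof.
  intros Hn Hx. rewrite concat_eq, upd0' by (auto; lra). destruct Rle_dec; [lra|].
  rewrite upd_upd; auto.
Qed.

Lemma rev_upd X n f (t : cube n) x : (0 < n)%nat -> 0 <= x <= 1 ->
  reverse X n f (upd t x) = f (upd t (1 - x)).
Proof. intros Hn Hx. rewrite reverse_eq, upd0' by auto. rewrite upd_upd; auto. Qed.

Lemma rp_upd X n f phi (t : cube n) x : (0 < n)%nat -> 0 <= x <= 1 ->
  rp X n f phi (upd t x) = f (upd t (phi x)).
Proof. intros Hn Hx. unfold rp. rewrite upd0' by auto. rewrite upd_upd; auto. Qed.

Lemma pointwise_upd X n (F G : cube n -> Base X) : (0 < n)%nat ->
  (forall t x, 0 <= x <= 1 -> F (upd t x) = G (upd t x)) -> F = G.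
Proof.
  intros Hn H. apply functional_extensionality; intro t.
  rewrite <- (upd_self n t). apply H. apply cpt_in; auto.
Qed.

Lemma rp_id X n f : rp X n f (fun x => x) = f.
Proof. apply functional_extensionality; intro t. unfold rp. rewrite upd_self; auto. Qed.

Lemma rp_const X x0 n f c : (0 < n)%nat -> is_Omega X x0 n f -> (c = 0 \/ c = 1) ->
  rp X n f (fun _ => c) = (fun _ => x0).
Proof.
  intros Hn [_ Hb] Hc. apply functional_extensionality; intro t. unfold rp.
  apply Hb. destruct Hc as [->| ->]; [apply bnd_upd0|apply bnd_upd1]; auto.
Qed.

Ltac lipsolve := intros; unfold Rmin, Rmax; repeat destruct Rle_dec; unfold Rabs; repeat destruct Rcase_abs; lra.

Definition phiA x := Rmin (2 * x) (Rmin (x + 1/4) ((x + 1) / 2)).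
Definition phiL x := Rmax 0 (2 * x - 1).
Definition phiR x := Rmin 1 (2 * x).
Definition phiI1 x := Rmin (2 * x) (2 - 2 * x).
Definition phiI2 x := Rmax (1 - 2 * x) (2 * x - 1).

Lemma good_id : goodphi (fun x => x).
Proof. split; lipsolve. Qed.
Lemma good_c c : 0 <= c <= 1 -> goodphi (fun _ => c).
Proof. intro; split; lipsolve. Qed.
Lemma good_A : goodphi phiA.
Proof. unfold phiA; split; lipsolve. Qed.
Lemma good_L : goodphi phiL.
Proof. unfold phiL; split; lipsolve. Qed.
Lemma good_R : goodphi phiR.
Proof. unfold phiR; split; lipsolve. Qed.
Lemma good_I1 : goodphi phiI1.
Proof. unfold phiI1; split; lipsolve. Qed.
Lemma good_I2 : goodphi phiI2.
Proof. unfold phiI2; split; lipsolve. Qed.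

Lemma hom_ext_r X x0 n f g g' : homotopic X x0 n f g -> g = g' -> homotopic X x0 n f g'.
Proof. intros H ->; auto. Qed.
Lemma hom_ext_l X x0 n f f' g : homotopic X x0 n f g -> f = f' -> homotopic X x0 n f' g.
Proof. intros H ->; auto. Qed.

Ltac phisimp := unfold phiA, phiL, phiR, phiI1, phiI2, Rmin, Rmax; repeat destruct Rle_dec; try lra.
Ltac crw := repeat first [rewrite cc_upd_l by (auto; lra) | rewrite cc_upd_r by (auto; lra) | rewrite rev_upd by (auto; lra)].

Lemma assoc_hom X x0 n f g h : (0 < n)%nat -> is_Omega X x0 n f -> is_Omega X x0 n g -> is_Omega X x0 n h ->
  homotopic X x0 n (concat X n (concat X n f g) h) (concat X n f (concat X n g h)).
Proof.
  intros Hn Hf Hg Hh. set (F := concat X n f (concat X n g h)).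
  assert (HF : is_Omega X x0 n F) by (apply concat_Omega; auto; apply concat_Omega; auto).
  apply hom_ext_l with (rp X n F phiA).
  - apply hom_ext_r with (rp X n F (fun x => x)); [|apply rp_id].
    apply reparam_hom; auto; try apply good_A; try apply good_id; unfold phiA, Rmin; repeat destruct Rle_dec; lra.
  - apply pointwise_upd; auto. intros t x Hx. rewrite rp_upd by auto. unfold F.
    assert (R1 : 0 <= phiA x <= 1) by (apply good_A; auto).
    destruct (Rle_dec x (1/4)).
    + replace (phiA x) with (2 * x) by phisimp. crw. f_equal; apply upd_ext'; lra.
    + destruct (Rle_dec x (1/2)).
      * replace (phiA x) with (x + 1/4) by phisimp. crw. f_equal; apply upd_ext'; lra.
      * replace (phiA x) with ((x + 1) / 2) by phisimp. crw. f_equal; apply upd_ext'; lra.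
Qed.

Lemma Omega_x0 X x0 n f (t : cube n) x : (0 < n)%nat -> is_Omega X x0 n f -> (x = 0 \/ x = 1) -> f (upd t x) = x0.
Proof. intros Hn [_ Hb] [->| ->]; apply Hb; [apply bnd_upd0|apply bnd_upd1]; auto. Qed.

Lemma lid_hom X x0 n f : (0 < n)%nat -> is_Omega X x0 n f ->
  homotopic X x0 n (concat X n (fun _ => x0) f) f.
Proof.
  intros Hn Hf. apply hom_ext_l with (rp X n f phiL).
  - apply hom_ext_r with (rp X n f (fun x => x)); [|apply rp_id].
    apply reparam_hom; auto; try apply good_L; try apply good_id; unfold phiL, Rmax; repeat destruct Rle_dec; lra.
  - apply pointwise_upd; auto. intros t x Hx. rewrite rp_upd by auto.
    destruct (Rle_dec x (1/2)).
    + replace (phiL x) with 0 by phisimp. crw. cbv beta. eapply Omega_x0; eauto.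
    + replace (phiL x) with (2 * x - 1) by phisimp. crw. auto.
Qed.

Lemma rid_hom X x0 n f : (0 < n)%nat -> is_Omega X x0 n f ->
  homotopic X x0 n (concat X n f (fun _ => x0)) f.
Proof.
  intros Hn Hf. apply hom_ext_l with (rp X n f phiR).
  - apply hom_ext_r with (rp X n f (fun x => x)); [|apply rp_id].
    apply reparam_hom; auto; try apply good_R; try apply good_id; unfold phiR, Rmin; repeat destruct Rle_dec; lra.
  - apply pointwise_upd; auto. intros t x Hx. rewrite rp_upd by auto.
    destruct (Rle_dec x (1/2)).
    + replace (phiR x) with (2 * x) by phisimp. crw. auto.
    + replace (phiR x) with 1 by phisimp. crw. cbv beta. eapply Omega_x0; eauto.
Qed.

Lemma rinv_hom X x0 n f : (0 < n)%nat -> is_Omega X x0 n f ->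
  homotopic X x0 n (concat X n f (reverse X n f)) (fun _ => x0).
Proof.
  intros Hn Hf. apply hom_ext_l with (rp X n f phiI1).
  - apply hom_ext_r with (rp X n f (fun _ => 0)); [|apply rp_const; auto].
    apply reparam_hom; auto; try apply good_I1; try (apply good_c; lra); unfold phiI1, Rmin; repeat destruct Rle_dec; lra.
  - apply pointwise_upd; auto. intros t x Hx. rewrite rp_upd by auto.
    destruct (Rle_dec x (1/2)).
    + replace (phiI1 x) with (2 * x) by phisimp. crw. auto.
    + replace (phiI1 x) with (2 - 2 * x) by phisimp. crw. f_equal; apply upd_ext'; lra.
Qed.

Lemma linv_hom X x0 n f : (0 < n)%nat -> is_Omega X x0 n f ->
  homotopic X x0 n (concat X n (reverse X n f) f) (fun _ => x0).
Proof.
  intros Hn Hf. apply hom_ext_l with (rp X n f phiI2).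
  - apply hom_ext_r with (rp X n f (fun _ => 1)); [|apply rp_const; auto].
    apply reparam_hom; auto; try apply good_I2; try (apply good_c; lra); unfold phiI2, Rmax; repeat destruct Rle_dec; lra.
  - apply pointwise_upd; auto. intros t x Hx. rewrite rp_upd by auto.
    destruct (Rle_dec x (1/2)).
    + replace (phiI2 x) with (1 - 2 * x) by phisimp. crw. auto.
    + replace (phiI2 x) with (2 * x - 1) by phisimp. crw. auto.
Qed.

Definition rep X x0 n (A : pi_n X x0 n) (a : Omega X x0 n) :=
  forall c, proj1_sig A c <-> cls X x0 n a c.

Lemma pi_rep X x0 n (A : pi_n X x0 n) : exists a, rep X x0 n A a.
Proof. destruct A as [A [a Ha]]. exists a. exact Ha. Qed.

Lemma rep_mem X x0 n A a : rep X x0 n A a -> proj1_sig A a.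
Proof. intro H. apply H. apply hom_refl. exact (proj2_sig a). Qed.

Lemma mem_rep X x0 n A f : (0 < n)%nat -> proj1_sig A f -> rep X x0 n A f.
Proof.
  intros Hn Hf. destruct (pi_rep X x0 n A) as [a Ha].
  pose proof (proj1 (Ha f) Hf) as Haf. unfold rep, cls in *.
  intro c. rewrite Ha. unfold cls. split; intro H.
  - eapply hom_trans; eauto. apply hom_sym; auto.
  - eapply hom_trans; eauto.
Qed.

Lemma pi_eq X x0 n (A B : pi_n X x0 n) : (forall c, proj1_sig A c <-> proj1_sig B c) -> A = B.
Proof.
  destruct A as [A HA], B as [B HB]; simpl; intro H.
  assert (A = B) by (apply functional_extensionality; intro c; apply propositional_extensionality; auto).
  subst; f_equal; apply proof_irrelevance.
Qed.

Lemma rep_eq X x0 n A B a b : (0 < n)%nat -> rep X x0 n A a -> rep X x0 n B b ->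
  homotopic X x0 n (proj1_sig a) (proj1_sig b) -> A = B.
Proof.
  intros Hn Ha Hb Hab. unfold rep in *. apply pi_eq; intro c. rewrite Ha, Hb. unfold cls. split; intro H.
  - eapply hom_trans; eauto. apply hom_sym; auto.
  - eapply hom_trans; eauto.
Qed.

Definition oc X x0 n (Hn : (0 < n)%nat) (a b : Omega X x0 n) : Omega X x0 n :=
  exist _ (concat X n (proj1_sig a) (proj1_sig b)) (concat_Omega X x0 n _ _ Hn (proj2_sig a) (proj2_sig b)).
Definition orv X x0 n (Hn : (0 < n)%nat) (a : Omega X x0 n) : Omega X x0 n :=
  exist _ (reverse X n (proj1_sig a)) (reverse_Omega X x0 n _ Hn (proj2_sig a)).

Lemma mulc_char X x0 n Hn A B a b : rep X x0 n A a -> rep X x0 n B b ->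
  forall c, mulc X x0 n (proj1_sig A) (proj1_sig B) c <-> cls X x0 n (oc X x0 n Hn a b) c.
Proof.
  intros Ha Hb c. unfold mulc, cls, oc; simpl. split.
  - intros [a' [b' [Ha' [Hb' H]]]]. apply Ha in Ha'. apply Hb in Hb'. unfold cls in *.
    eapply hom_trans; [auto| |exact H]. apply concat_hom; auto.
  - intro H. exists a, b. split; [apply rep_mem; auto|split; [apply rep_mem; auto|auto]].
Qed.

Lemma invc_char X x0 n Hn A a : rep X x0 n A a ->
  forall c, invc X x0 n (proj1_sig A) c <-> cls X x0 n (orv X x0 n Hn a) c.
Proof.
  intros Ha c. unfold invc, cls, orv; simpl. split.
  - intros [a' [Ha' H]]. apply Ha in Ha'. unfold cls in *.
    eapply hom_trans; [auto| |exact H]. apply reverse_hom; auto.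
  - intro H. exists a. split; [apply rep_mem; auto|auto].
Qed.

Lemma pmul_char X x0 n (Hn : (0 < n)%nat) A B :
  proj1_sig (pmul X x0 n A B) = mulc X x0 n (proj1_sig A) (proj1_sig B).
Proof.
  unfold pmul. destruct excluded_middle_informative as [p|p]; auto. exfalso; apply p.
  destruct (pi_rep X x0 n A) as [a Ha], (pi_rep X x0 n B) as [b Hb].
  exists (oc X x0 n Hn a b). apply mulc_char; auto.
Qed.

Lemma pinv_char X x0 n (Hn : (0 < n)%nat) A :
  proj1_sig (pinv X x0 n A) = invc X x0 n (proj1_sig A).
Proof.
  unfold pinv. destruct excluded_middle_informative as [p|p]; auto. exfalso; apply p.
  destruct (pi_rep X x0 n A) as [a Ha].
  exists (orv X x0 n Hn a). apply invc_char; auto.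
Qed.

Lemma rep_mul X x0 n Hn A B a b : rep X x0 n A a -> rep X x0 n B b ->
  rep X x0 n (pmul X x0 n A B) (oc X x0 n Hn a b).
Proof. intros Ha Hb c. rewrite pmul_char by auto. apply mulc_char; auto. Qed.

Lemma rep_inv X x0 n Hn A a : rep X x0 n A a -> rep X x0 n (pinv X x0 n A) (orv X x0 n Hn a).
Proof. intros Ha c. rewrite pinv_char by auto. apply invc_char; auto. Qed.

Lemma rep_e X x0 n : rep X x0 n (pe X x0 n) (const_loop X x0 n).
Proof. intro c. simpl. tauto. Qed.

Lemma g_assoc X x0 n (Hn : (0 < n)%nat) A B C :
  pmul X x0 n A (pmul X x0 n B C) = pmul X x0 n (pmul X x0 n A B) C.
Proof.
  destruct (pi_rep X x0 n A) as [a Ha], (pi_rep X x0 n B) as [b Hb], (pi_rep X x0 n C) as [c Hc].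
  eapply rep_eq; [auto| apply (rep_mul X x0 n Hn); [exact Ha| apply (rep_mul X x0 n Hn); eauto]
                      | apply (rep_mul X x0 n Hn); [apply (rep_mul X x0 n Hn); eauto| exact Hc]|].
  simpl. apply hom_sym; auto. apply assoc_hom; auto; apply proj2_sig.
Qed.

Lemma g_mul1 X x0 n (Hn : (0 < n)%nat) A : pmul X x0 n (pe X x0 n) A = A.
Proof.
  destruct (pi_rep X x0 n A) as [a Ha].
  eapply rep_eq; [auto| apply (rep_mul X x0 n Hn); [apply rep_e| exact Ha] | exact Ha |].
  simpl. apply lid_hom; auto; apply proj2_sig.
Qed.

Lemma g_mulg1 X x0 n (Hn : (0 < n)%nat) A : pmul X x0 n A (pe X x0 n) = A.
Proof.
  destruct (pi_rep X x0 n A) as [a Ha].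
  eapply rep_eq; [auto| apply (rep_mul X x0 n Hn); [exact Ha| apply rep_e] | exact Ha |].
  simpl. apply rid_hom; auto; apply proj2_sig.
Qed.

Lemma g_mulV X x0 n (Hn : (0 < n)%nat) A : pmul X x0 n (pinv X x0 n A) A = pe X x0 n.
Proof.
  destruct (pi_rep X x0 n A) as [a Ha].
  eapply rep_eq; [auto| apply (rep_mul X x0 n Hn); [apply (rep_inv X x0 n Hn); exact Ha| exact Ha] | apply rep_e |].
  simpl. apply linv_hom; auto; apply proj2_sig.
Qed.

Lemma g_mulgV X x0 n (Hn : (0 < n)%nat) A : pmul X x0 n A (pinv X x0 n A) = pe X x0 n.
Proof.
  destruct (pi_rep X x0 n A) as [a Ha].
  eapply rep_eq; [auto| apply (rep_mul X x0 n Hn); [exact Ha| apply (rep_inv X x0 n Hn); exact Ha] | apply rep_e |].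
  simpl. apply rinv_hom; auto; apply proj2_sig.
Qed.

Lemma ginv_uniq X x0 n (Hn : (0 < n)%nat) x y : pmul X x0 n x y = pe X x0 n -> y = pinv X x0 n x.
Proof.
  intro H. rewrite <- (g_mul1 X x0 n Hn y), <- (g_mulV X x0 n Hn x), <- g_assoc, H, g_mulg1 by auto; auto.
Qed.

Lemma ginvinv X x0 n (Hn : (0 < n)%nat) x : pinv X x0 n (pinv X x0 n x) = x.
Proof. symmetry; apply ginv_uniq; auto. apply g_mulV; auto. Qed.

Lemma ginvM X x0 n (Hn : (0 < n)%nat) x y :
  pinv X x0 n (pmul X x0 n x y) = pmul X x0 n (pinv X x0 n y) (pinv X x0 n x).
Proof.
  symmetry; apply ginv_uniq; auto.
  rewrite <- g_assoc by auto. rewrite (g_assoc X x0 n Hn y). rewrite g_mulgV, g_mul1, g_mulgV by auto. auto.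
Qed.

Lemma g1 X x0 n (Hn : (0 < n)%nat) A B : pmul X x0 n A (pmul X x0 n (pinv X x0 n A) B) = B.
Proof. rewrite g_assoc, g_mulgV, g_mul1 by auto; auto. Qed.

Lemma g2 X x0 n (Hn : (0 < n)%nat) A B C :
  pmul X x0 n (pinv X x0 n A) C = pmul X x0 n (pmul X x0 n (pinv X x0 n A) B) (pmul X x0 n (pinv X x0 n B) C).
Proof. rewrite <- g_assoc by auto. rewrite (g1 X x0 n Hn B C). auto. Qed.

Lemma g3 X x0 n (Hn : (0 < n)%nat) a b a' b' :
  pmul X x0 n (pinv X x0 n (pmul X x0 n a b)) (pmul X x0 n a' b') =
  pmul X x0 n (pmul X x0 n (pmul X x0 n (pinv X x0 n b) (pmul X x0 n (pinv X x0 n a) a')) (pinv X x0 n (pinv X x0 n b)))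
     (pmul X x0 n (pinv X x0 n b) b').
Proof.
  rewrite ginvinv by auto. rewrite <- (g_assoc X x0 n Hn _ b). rewrite g1 by auto.
  rewrite ginvM by auto. rewrite <- !g_assoc by auto. auto.
Qed.

Lemma g4 X x0 n (Hn : (0 < n)%nat) a a' :
  pmul X x0 n (pinv X x0 n (pinv X x0 n a)) (pinv X x0 n a') =
  pmul X x0 n (pmul X x0 n a (pinv X x0 n (pmul X x0 n (pinv X x0 n a) a'))) (pinv X x0 n a).
Proof.
  rewrite ginvinv, ginvM, ginvinv by auto.
  rewrite <- !g_assoc by auto. rewrite g_mulgV, g_mulg1 by auto. auto.
Qed.

Definition near X x0 n r (A B : pi_n X x0 n) :=
  exists f g, proj1_sig A f /\ proj1_sig B g /\ exists m, m < r /\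
    forall t, dist X (proj1_sig f t) (proj1_sig g t) <= m.

Lemma mu_spec X x0 n f g : Rbar_is_lub (fun r => exists t, r = Finite (dist X (proj1_sig f t) (proj1_sig g t)))
  (mu X x0 n f g).
Proof. unfold mu, Rbar_lub. apply proj2_sig. Qed.

Lemma rho_spec X x0 n A B : Rbar_is_glb
  (fun m => exists f g, proj1_sig A f /\ proj1_sig B g /\ m = mu X x0 n f g) (rho X x0 n A B).
Proof. unfold rho, Rbar_glb. apply proj2_sig. Qed.

Definition pt0 n : cube n := clamp n (fun _ => 0).

Lemma ball_near X x0 n r A B : rho_ball X x0 n A r B <-> near X x0 n r A B.
Proof.
  unfold rho_ball. split.
  - intro H. destruct (classic (exists f g, proj1_sig A f /\ proj1_sig B g /\ Rbar_lt (mu X x0 n f g) r)) as [[f [g [Hf [Hg Hm]]]]|Hno].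
    + pose proof (mu_spec X x0 n f g) as [Hub Hl].
      pose proof (Hub _ (ex_intro _ (pt0 n) eq_refl)) as H0.
      remember (mu X x0 n f g) as M. destruct M as [m| |]; simpl in *; try tauto.
      exists f, g; split; auto; split; auto. exists m; split; auto.
      intro t. exact (Hub _ (ex_intro _ t eq_refl)).
    + exfalso. pose proof (rho_spec X x0 n A B) as [_ Hg].
      assert (Hlb : Rbar_le r (rho X x0 n A B)).
      { apply Hg. intros x [f [g [Hf [Hg' ->]]]]. apply Rbar_not_lt_le. intro Hlt. apply Hno; eauto. }
      exact (Rbar_lt_not_le _ _ H Hlb).
  - intros [f [g [Hf [Hg [m [Hm Hd]]]]]].
    pose proof (mu_spec X x0 n f g) as [_ Hl].
    assert (H1 : Rbar_le (mu X x0 n f g) m).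
    { apply Hl. intros x [t ->]. simpl. auto. }
    pose proof (rho_spec X x0 n A B) as [Hlb _].
    assert (H2 : Rbar_le (rho X x0 n A B) (mu X x0 n f g)) by (apply Hlb; eauto).
    eapply Rbar_le_lt_trans; [exact H2|]. eapply Rbar_le_lt_trans; [exact H1|]. simpl; auto.
Qed.

Lemma dist_concat X n f1 f2 g1 g2 m :
  (forall t, dist X (f1 t) (g1 t) <= m) -> (forall t, dist X (f2 t) (g2 t) <= m) ->
  forall t, dist X (concat X n f1 f2 t) (concat X n g1 g2 t) <= m.
Proof. intros H1 H2 t. rewrite !concat_eq. destruct Rle_dec; auto. Qed.

Lemma dist_rev X n f g m : (forall t, dist X (f t) (g t) <= m) ->
  forall t, dist X (reverse X n f t) (reverse X n g t) <= m.
Proof. intros H t. rewrite !reverse_eq. auto. Qed.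

Lemma dist_self X n (f : cube n -> Base X) m : 0 <= m -> forall t, dist X (f t) (f t) <= m.
Proof. intros Hm t. rewrite (proj2 (dist_refl X _ _) eq_refl). auto. Qed.

Lemma m_nonneg X n (f g : cube n -> Base X) m : (forall t, dist X (f t) (g t) <= m) -> 0 <= m.
Proof. intro H. specialize (H (pt0 n)). pose proof (dist_pos X (f (pt0 n)) (g (pt0 n))). lra. Qed.

Lemma concat_const X x0 n : concat X n (fun _ : cube n => x0) (fun _ => x0) = (fun _ => x0).
Proof. apply functional_extensionality; intro t. rewrite concat_eq. destruct Rle_dec; auto. Qed.

Lemma near_e X x0 n r : 0 < r -> near X x0 n r (pe X x0 n) (pe X x0 n).
Proof.
  intro Hr. exists (const_loop X x0 n), (const_loop X x0 n).
  split; [apply rep_mem, rep_e|split; [apply rep_mem, rep_e|]].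
  exists 0; split; auto. apply dist_self; lra.
Qed.

Lemma near_mul X x0 n (Hn : (0 < n)%nat) r A B :
  near X x0 n r (pe X x0 n) A -> near X x0 n r (pe X x0 n) B -> near X x0 n r (pe X x0 n) (pmul X x0 n A B).
Proof.
  intros [f1 [g1 [Hf1 [Hg1 [m1 [Hm1 Hd1]]]]]] [f2 [g2 [Hf2 [Hg2 [m2 [Hm2 Hd2]]]]]].
  exists (oc X x0 n Hn f1 f2), (oc X x0 n Hn g1 g2). split; [|split].
  - simpl. unfold cls in *; simpl in *. apply hom_ext_l with (concat X n (fun _ => x0) (fun _ => x0)).
    + apply concat_hom; auto.
    + apply concat_const.
  - apply rep_mem, rep_mul; apply mem_rep; auto.
  - exists (Rmax m1 m2). split; [apply Rmax_lub_lt; auto|]. simpl.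
    apply dist_concat; intro t; eapply Rle_trans; [apply Hd1|apply Rmax_l| apply Hd2|apply Rmax_r].
Qed.

Lemma near_inv X x0 n (Hn : (0 < n)%nat) r A :
  near X x0 n r (pe X x0 n) A -> near X x0 n r (pe X x0 n) (pinv X x0 n A).
Proof.
  intros [f1 [g1 [Hf1 [Hg1 [m1 [Hm1 Hd1]]]]]].
  exists (orv X x0 n Hn f1), (orv X x0 n Hn g1). split; [|split].
  - simpl. unfold cls in *; simpl in *. exact (reverse_hom X x0 n _ _ Hn Hf1).
  - apply rep_mem, rep_inv; apply mem_rep; auto.
  - exists m1. split; auto. simpl. apply dist_rev; auto.
Qed.

Lemma near_conj X x0 n (Hn : (0 < n)%nat) r G H :
  near X x0 n r (pe X x0 n) H ->
  near X x0 n r (pe X x0 n) (pmul X x0 n (pmul X x0 n G H) (pinv X x0 n G)).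
Proof.
  intros [f [g [Hf [Hg [m [Hm Hd]]]]]]. destruct (pi_rep X x0 n G) as [k Hk].
  exists (oc X x0 n Hn (oc X x0 n Hn k f) (orv X x0 n Hn k)), (oc X x0 n Hn (oc X x0 n Hn k g) (orv X x0 n Hn k)).
  split; [|split].
  - simpl. unfold cls in *; simpl in *. apply hom_sym; auto.
    pose proof (proj2_sig k) as Ok. pose proof (proj2_sig f) as Of. simpl in *.
    eapply hom_trans; auto.
    { apply concat_hom; auto; [apply concat_hom; auto; [apply hom_refl; auto| apply hom_sym; [auto| exact Hf]]|].
      apply hom_refl; apply reverse_Omega; auto. }
    eapply hom_trans; auto.
    { apply concat_hom; auto; [apply rid_hom; auto|]. apply hom_refl; apply reverse_Omega; auto. }
    apply rinv_hom; auto.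
  - apply rep_mem, rep_mul; [apply rep_mul; [exact Hk| apply mem_rep; auto]| apply rep_inv; exact Hk].
  - exists m. split; auto. simpl. pose proof (m_nonneg X n _ _ m Hd).
    apply dist_concat; [apply dist_concat; [apply dist_self; auto| exact Hd]| apply dist_self; auto].
Qed.

Lemma near_shift X x0 n (Hn : (0 < n)%nat) r A B :
  near X x0 n r A B <-> near X x0 n r (pe X x0 n) (pmul X x0 n (pinv X x0 n A) B).
Proof.
  split.
  - intros [f [g [Hf [Hg [m [Hm Hd]]]]]].
    exists (oc X x0 n Hn (orv X x0 n Hn f) f), (oc X x0 n Hn (orv X x0 n Hn f) g). split; [|split].
    + simpl. unfold cls; simpl. apply hom_sym; auto. apply linv_hom; auto. apply proj2_sig.
    + apply rep_mem, rep_mul; [apply rep_inv|]; apply mem_rep; auto.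
    + exists m; split; auto. simpl. pose proof (m_nonneg X n _ _ m Hd).
      apply dist_concat; [apply dist_self; auto| exact Hd].
  - intros [f [g [Hf [Hg [m [Hm Hd]]]]]]. destruct (pi_rep X x0 n A) as [k Hk].
    exists (oc X x0 n Hn k f), (oc X x0 n Hn k g). split; [|split].
    + apply Hk. unfold cls in *; simpl in *. apply hom_sym; auto.
      pose proof (proj2_sig k) as Ok. eapply hom_trans; auto.
      { apply concat_hom; auto; [apply hom_refl; auto| apply hom_sym; [auto| exact Hf]]. }
      apply rid_hom; auto.
    + rewrite <- (g1 X x0 n Hn A B). apply rep_mem, rep_mul; [exact Hk| apply mem_rep; auto].
    + exists m; split; auto. simpl. pose proof (m_nonneg X n _ _ m Hd).
      apply dist_concat; [apply dist_self; auto| exact Hd].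
Qed.

Lemma ball_iff X x0 n (Hn : (0 < n)%nat) r A B :
  rho_ball X x0 n A r B <-> near X x0 n r (pe X x0 n) (pmul X x0 n (pinv X x0 n A) B).
Proof. rewrite ball_near. apply near_shift; auto. Qed.

Lemma ball_open X x0 n (Hn : (0 < n)%nat) r A : 0 < r -> rho_open X x0 n (rho_ball X x0 n A r).
Proof.
  intros Hr B HB. exists r; split; auto. intros C HC.
  rewrite ball_iff in * by auto. rewrite (g2 X x0 n Hn A B C). apply near_mul; auto.
Qed.

Lemma ball_self X x0 n (Hn : (0 < n)%nat) r A : 0 < r -> rho_ball X x0 n A r A.
Proof. intro Hr. rewrite ball_iff, g_mulV by auto. apply near_e; auto. Qed.

Theorem proposition4p6 (X : Metric_Space) (x0 : Base X) (n : nat) (hn : (1 <= n)%nat) :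
  (forall a b : pi_n X x0 n,
      proj1_sig (pmul X x0 n a b) = mulc X x0 n (proj1_sig a) (proj1_sig b)) /\
  (forall a : pi_n X x0 n, proj1_sig (pinv X x0 n a) = invc X x0 n (proj1_sig a)) /\
  is_topological_group (pmul X x0 n) (pinv X x0 n) (pe X x0 n) (rho_open X x0 n) /\
  (forall r, 0 < r ->
     is_open_normal_subgroup (pmul X x0 n) (pinv X x0 n) (pe X x0 n) (rho_open X x0 n)
       (rho_ball X x0 n (pe X x0 n) r)).
Proof.
  assert (Hn : (0 < n)%nat) by exact hn.
  split; [intros; apply pmul_char; auto|].
  split; [intros; apply pinv_char; auto|].
  split.
  - constructor.
    + intros; apply g_assoc; auto.
    + intros; apply g_mul1; auto.
    + intros; apply g_mulg1; auto.
    + intros; apply g_mulV; auto.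
    + intros; apply g_mulgV; auto.
    + intros W HW [a b] Hab. simpl in Hab. destruct (HW _ Hab) as [r [Hr HrW]].
      exists (rho_ball X x0 n a r), (rho_ball X x0 n b r).
      split; [apply ball_open; auto|]. split; [apply ball_open; auto|].
      split; [apply ball_self; auto|]. split; [apply ball_self; auto|].
      intros a' b' Ha' Hb'. apply HrW. rewrite ball_iff in * by auto.
      rewrite g3 by auto. apply near_mul; auto. apply near_conj; auto.
    + intros W HW a Ha. destruct (HW _ Ha) as [r [Hr HrW]].
      exists r; split; auto. intros a' Ha'. apply HrW. rewrite ball_iff in * by auto.
      rewrite g4 by auto. apply near_conj; auto. apply near_inv; auto.
  - intros r Hr. split; [apply ball_open; auto|].
    split; [apply ball_self; auto|].
    split; [|split].
    + intros a b Ha Hb. rewrite ball_near in *. apply near_mul; auto.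
    + intros a Ha. rewrite ball_near in *. apply near_inv; auto.
    + intros g h Hh. rewrite ball_near in *. apply near_conj; auto.
Qed.
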